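(* Let $(R_1,\mathfrak n_1,k)$ and $(R_2,\mathfrak n_2,k)$ be Noetherian local rings of positive depth with common residue field $k$, and let $R=R_1\times_k R_2$ be their fiber product over $k$. Then $\mathcal T(R)$ is finite if and only if both $\mathcal T(R_1)$ and $\mathcal T(R_2)$ are finite.
   Context: $R_1\times_kR_2=\{(s,t)\in R_1\times R_2\mid \pi_1(s)=\pi_2(t)\}$ with $\pi_j\colon R_j\to k$ the canonical surjections. For a ring $A$, $\mathcal T(A)$ is the set of trace ideals of $A$ containing a non-zerodivisor, where the trace ideal of an $A$-module $M$ is $\sum_{f\in\mathrm{Hom}_A(M,A)}\mathrm{Im}f$. *)

(* Defs.v *)
From HB Require Import structures.
From mathcomp Require Import all_boot all_order all_algebra.
From mathcomp Require Import boolp classical_sets cardinality.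
Set Implicit Arguments. Unset Strict Implicit. Unset Printing Implicit Defensive.
Import GRing.Theory.
Local Open Scope ring_scope.
Local Open Scope classical_set_scope.

Definition is_ideal (A : comNzRingType) (I : set A) : Prop :=
  I 0 /\ (forall x y, I x -> I y -> I (x + y)) /\ (forall a x, I x -> I (a * x)).

Definition maximal_ideal (A : comNzRingType) (m : set A) : Prop :=
  is_ideal m /\ ~ m 1 /\
  (forall J : set A, is_ideal J -> m `<=` J -> J = m \/ J = setT).

Definition is_local (A : comNzRingType) : Prop :=
  exists m : set A, maximal_ideal m /\ forall m', maximal_ideal m' -> m' = m.

Definition gen_ideal (A : comNzRingType) (s : seq A) : set A :=
  [set x | exists c : 'I_(size s) -> A, x = \sum_(i < size s) c i * s`_i].

Definition noetherian (A : comNzRingType) : Prop :=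
  forall I : set A, is_ideal I -> exists s : seq A, I = gen_ideal s.

Definition nonzerodivisor (A : comNzRingType) (x : A) : Prop :=
  forall y, x * y = 0 -> y = 0.

(* depth A > 0 for a local ring: the maximal ideal contains an A-regular
   element (a regular sequence of length 1). *)
Definition positive_depth (A : comNzRingType) : Prop :=
  forall m : set A, maximal_ideal m -> exists2 x, m x & nonzerodivisor x.

Definition trace_ideal (A : comNzRingType) (M : lmodType A) : set A :=
  [set a | exists (n : nat) (f : 'I_n -> {linear M -> A^o}) (v : 'I_n -> M),
            a = \sum_(i < n) f i (v i)].

Definition calT (A : comNzRingType) : set (set A) :=
  [set I | (exists M : lmodType A, I = trace_ideal M) /\
           exists2 x, I x & nonzerodivisor x].

Arguments calT A : clear implicits.
Section FiberProduct.
Variables (R1 R2 : comNzRingType) (k : fieldType).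
Variables (pi1 : {rmorphism R1 -> k}) (pi2 : {rmorphism R2 -> k}).

Definition fp_pred : {pred R1 * R2} := [pred x | pi1 x.1 == pi2 x.2].

Lemma fp_closed : subring_closed fp_pred.
Proof.
split; rewrite /fp_pred /= ?inE /=.
- by rewrite !rmorph1.
- by move=> x y; rewrite !inE /= !rmorphB => /eqP-> /eqP->.
- by move=> x y; rewrite !inE /= !rmorphM => /eqP-> /eqP->.
Qed.

HB.instance Definition _ := GRing.isSubringClosed.Build (R1 * R2)%type fp_pred fp_closed.

Record fiber_product := FiberProd { fp_val :> R1 * R2 ; _ : fp_val \in fp_pred }.

HB.instance Definition _ := [isSub for fp_val].
HB.instance Definition _ := [Choice of fiber_product by <:].
HB.instance Definition _ := [SubChoice_isSubComNzRing of fiber_product by <:].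

End FiberProduct.

(* Main.v *)
Require Import Defs.
From HB Require Import structures.
From mathcomp Require Import all_boot all_order all_algebra.
From mathcomp Require Import boolp classical_sets cardinality.
Set Implicit Arguments. Unset Strict Implicit. Unset Printing Implicit Defensive.
Import GRing.Theory.
Local Open Scope ring_scope.
Local Open Scope classical_set_scope.

Record ideal_of (A : comNzRingType) := IdealOf { icar : set A; icarP : is_ideal icar }.

Section IMod.
Variables (A : comNzRingType) (J : ideal_of A).
Definition ipred : {pred A^o} := fun x => `[< icar J x >].
Lemma ipred_closed : submod_closed ipred.
Proof.
have [I0 [ID IM]] := icarP J; split; first by rewrite unfold_in; apply/asboolP.
move=> a u v; rewrite !unfold_in => /asboolP Hu /asboolP Hv; apply/asboolP.
exact: ID (IM _ _ Hu) Hv.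
Qed.
HB.instance Definition _ := GRing.isSubmodClosed.Build A A^o ipred ipred_closed.
Record imod := IMod { ival : A^o; _ : ival \in ipred }.
HB.instance Definition _ := [isSub for ival].
HB.instance Definition _ := [Choice of imod by <:].
HB.instance Definition _ := [SubChoice_isSubLmodule of imod by <:].
Definition ivalL : {linear imod -> A^o} := GRing.Linear.clone _ _ _ _ (val : imod -> A^o) _.
End IMod.

Definition lin_on (A : comNzRingType) (J : set A) (phi : A -> A) :=
  forall a x y, J x -> J y -> phi (a * x + y) = a * phi x + phi y.
Definition Pcl (A : comNzRingType) (J : set A) :=
  forall phi, lin_on J phi -> forall x, J x -> J (phi x).

Section Comp.
Variables (A : comNzRingType) (M : lmodType A) (J : set A) (phi : A -> A)
  (Hphi : lin_on J phi) (f : {linear M -> A^o}) (Hf : forall m, J (f m)).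
Definition compf : M -> A^o := fun m => phi (f m).
Lemma compf_lin : linear_for *:%R compf.
Proof. by move=> a u v; rewrite /compf linearP Hphi. Qed.
HB.instance Definition _ := GRing.isLinear.Build A M A^o *:%R compf compf_lin.
Definition compL : {linear M -> A^o} := GRing.Linear.clone _ _ _ _ compf _.
Lemma compLE m : compL m = phi (f m). Proof. by []. Qed.
End Comp.

Section General.
Variable A : comNzRingType.
Implicit Types J : set A.

Lemma lin_on0 J phi : J 0 -> lin_on J phi -> phi 0 = 0.
Proof.
move=> J0 H; have := H 1 0 0 J0 J0; rewrite !mul1r addr0.
by move=> /esym/eqP; rewrite -subr_eq0 addrK => /eqP.
Qed.

Lemma lin_on_sum J phi n (F : 'I_n -> A) : is_ideal J -> lin_on J phi ->
  (forall i, J (F i)) -> J (\sum_(i < n) F i) /\ phi (\sum_(i < n) F i) = \sum_(i < n) phi (F i).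
Proof.
move=> [J0 [JD JM]] H HF.
apply: (big_rec2 (fun y1 y2 => J y1 /\ phi y1 = y2)).
  by split => //; exact: lin_on0 H.
move=> i y1 y2 _ [Jy <-]; split; first exact: JD.
by have := H 1 (F i) y1 (HF i) Jy; rewrite !mul1r.
Qed.

Lemma trace_is_ideal (M : lmodType A) : is_ideal (trace_ideal M).
Proof.
split.
  have f0 : 'I_0 -> {linear M -> A^o} by case=> m; rewrite ltn0.
  by exists 0%N, f0, (fun _ => 0); rewrite big_ord0.
split.
  move=> x y [n [f [v ->]]] [n' [g [w ->]]].
  exists (n + n')%N, (fun i => match split i with inl j => f j | inr j => g j end),
    (fun i => match split i with inl j => v j | inr j => w j end).
  rewrite big_split_ord /=; congr (_ + _); apply: eq_bigr => i _.
    by rewrite (unsplitK (inl i) : split (lshift n' i) = inl i).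
  by rewrite (unsplitK (inr i) : split (rshift n i) = inr i).
move=> a x [n [f [v ->]]]; exists n, f, (fun i => a *: v i).
rewrite mulr_sumr; apply: eq_bigr => i _; by rewrite linearZ.
Qed.

Lemma trace_Pcl (M : lmodType A) : Pcl (trace_ideal M).
Proof.
move=> phi H x [n [f [v ->]]].
have Hf : forall i m, trace_ideal M (f i m).
  move=> i m; exists 1%N, (fun _ => f i), (fun _ => m); by rewrite big_ord1.
have [_ ->] := lin_on_sum (F := fun i => f i (v i)) (trace_is_ideal M) H (fun i => Hf i (v i)).
exists n, (fun i => compL H (Hf i)), v; apply: eq_bigr => i _; by rewrite compLE.
Qed.

Lemma Pcl_trace J (HJ : is_ideal J) : Pcl J -> J = trace_ideal (imod (IdealOf HJ)).
Proof.
move=> HP; apply/seteqP; split.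
  move=> x Jx; have xin : (x : A^o) \in ipred (IdealOf HJ).
    by rewrite unfold_in; apply/asboolP.
  exists 1%N, (fun _ => ivalL _), (fun _ => IMod xin); by rewrite big_ord1.
move=> x [n [f [v ->]]].
have [J0 [JD JM]] := HJ.
suff Hi : forall i, J (f i (v i)).
  by have [] := @lin_on_sum _ id _ (fun i => f i (v i)) HJ (fun a x y _ _ => erefl) Hi.
move=> i.
pose phi (y : A) : A := if insub (y : A^o) is Some u then f i u else 0.
have phiE (u : imod (IdealOf HJ)) : phi (val u) = f i u.
  by rewrite /phi valK.
have mem (y : A) : J y -> (y : A^o) \in ipred (IdealOf HJ).
  by move=> Jy; rewrite unfold_in; apply/asboolP.
have Hphi : lin_on J phi.
  move=> a y z Jy Jz.
  have -> : a * y + z = val (a *: (Sub y (mem _ Jy) : imod (IdealOf HJ)) + Sub z (mem _ Jz)).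
    by rewrite raddfD /=.
  by rewrite phiE linearP -!phiE !SubK.
rewrite -phiE; apply: HP Hphi _ _.
by have := valP (v i); rewrite unfold_in => /asboolP.
Qed.
End General.

Section Local.
Variable A : comNzRingType.

Lemma ideal1T (J : set A) : is_ideal J -> J 1 -> J = setT.
Proof.
move=> [_ [_ JM]] J1; apply/seteqP; split => // a _.
by rewrite -[a]mulr1; apply: JM.
Qed.

Lemma calT_iff (J : set A) : calT A J <->
  [/\ is_ideal J, Pcl J & exists2 x, J x & nonzerodivisor x].
Proof.
split.
  by move=> [[M ->] nz]; split => //; [exact: trace_is_ideal | exact: trace_Pcl].
move=> [HJ HP nz]; split => //; exists (imod (IdealOf HJ)); exact: Pcl_trace.
Qed.

Variables (k : fieldType) (pi : {rmorphism A -> k}).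
Hypothesis surj : forall c : k, exists s : A, pi s = c.

Lemma ker_max : maximal_ideal [set a | pi a = 0].
Proof.
split.
  split; first by rewrite /= rmorph0.
  split; first by move=> x y px py; rewrite /= rmorphD px py addr0.
  by move=> a x px; rewrite /= rmorphM px mulr0.
split; first by rewrite /= rmorph1; apply/eqP; exact: oner_neq0.
move=> J HJ sub; case: (pselect (exists2 y, J y & pi y != 0)) => [[y Jy py]|no].
  right; apply: ideal1T => //.
  have [s ps] := surj (pi y)^-1.
  have [_ [JD JM]] := HJ.
  have -> : (1 : A) = (1 - s * y) + s * y by rewrite subrK.
  apply: JD; last exact: JM.
  apply: sub; rewrite /= rmorphB rmorph1 rmorphM ps mulVf // subrr //.
left; apply/seteqP; split => // a Ja /=.
by apply/eqP; apply: contra_notT no => pa; exists a.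
Qed.

Hypothesis loc : is_local A.

Lemma local_unit x : pi x != 0 -> exists y, x * y = 1.
Proof.
move=> px; apply: contrapT => nounit.
have nou : forall y, x * y <> 1 by move=> y xy; apply: nounit; exists y.
pose P := [set J : set A | J = set0 \/ [/\ is_ideal J, ~ J 1 & J x]].
have PJ : forall J, P J -> forall c, J c -> [/\ is_ideal J, ~ J 1 & J x].
  by move=> J [->|//].
have [A0 [PA0 A0max]] : exists A0, P A0 /\ forall B, A0 `<` B -> ~ P B.
  apply: Zorn_bigcup => F FP Ftot.
  case: (pselect (exists c, (\bigcup_(X in F) X) c)) => [[c [X0 FX0 X0c]]|none]; last first.
    left; apply/seteqP; split => // a [X FX Xa]; by apply: none; exists a; exists X.
  have Hmem : forall Y c', F Y -> Y c' -> [/\ is_ideal Y, ~ Y 1 & Y x].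
    by move=> Y c' FY Yc; apply: PJ (FP _ FY) _ Yc.
  have [[X00 _] _ X0x] := Hmem _ _ FX0 X0c.
  right; split.
  - split; first by exists X0.
    split.
      move=> a b [Y1 FY1 Y1a] [Y2 FY2 Y2b].
      have [s12|s21] := Ftot _ _ FY1 FY2.
        have [[_ [D _]] _ _] := Hmem _ _ FY2 Y2b.
        by exists Y2 => //; apply: D => //; apply: s12.
      have [[_ [D _]] _ _] := Hmem _ _ FY1 Y1a.
      by exists Y1 => //; apply: D => //; apply: s21.
    move=> r a [Y FY Ya]; have [[_ [_ Mu]] _ _] := Hmem _ _ FY Ya.
    by exists Y => //; apply: Mu.
  - by move=> [Y FY Y1]; have [_ /(_ Y1)] := Hmem _ _ FY Y1.
  - by exists X0.
pose X := [set a : A | exists r, a = r * x].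
have PX : P X.
  right; split.
  - split; first by exists 0; rewrite mul0r.
    split; first by move=> a b [r ->] [t ->]; exists (r + t); rewrite mulrDl.
    by move=> a b [r ->]; exists (a * r); rewrite mulrA.
  - by move=> [r /esym]; rewrite mulrC; apply: nou.
  - by exists 1; rewrite mul1r.
have A0n0 : A0 <> set0.
  move=> A00; apply: (A0max X) => //; rewrite A00; split => // /(_ x) H.
  by apply: H; exists 1; rewrite mul1r.
have [HA0 A01 A0x] : [/\ is_ideal A0, ~ A0 1 & A0 x] by case: PA0.
have maxA0 : maximal_ideal A0.
  split => //; split => // K HK sub.
  case: (pselect (K 1)) => [K1|K1]; first by right; exact: ideal1T.
  left; apply: contrapT => neq; apply: (A0max K); last by right; split => //; apply: sub.
  split => // sub2; apply: neq; apply/seteqP; split => //.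
have [m [mmax muniq]] := loc.
have e1 := muniq _ maxA0; have e2 := muniq _ ker_max.
have : [set a | pi a = 0] x by rewrite e2 -e1.
by move=> /= /eqP; rewrite (negbTE px).
Qed.
End Local.

Section FP.
Variables (R R1 R2 : comNzRingType) (k : fieldType)
  (pi1 : {rmorphism R1 -> k}) (pi2 : {rmorphism R2 -> k})
  (p : {rmorphism R -> R1}) (q : {rmorphism R -> R2}) (mk : R1 -> R2 -> R).
Hypotheses (pq_inj : forall z z', p z = p z' -> q z = q z' -> z = z')
  (pq_fib : forall z, pi1 (p z) = pi2 (q z))
  (mk_p : forall c d, pi1 c = pi2 d -> p (mk c d) = c)
  (mk_q : forall c d, pi1 c = pi2 d -> q (mk c d) = d)
  (surj1 : forall c : k, exists s : R1, pi1 s = c)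
  (surj2 : forall c : k, exists t : R2, pi2 t = c)
  (unit1 : forall x, pi1 x != 0 -> exists y, x * y = 1)
  (unit2 : forall x, pi2 x != 0 -> exists y, x * y = 1)
  (nz1 : exists2 a, pi1 a = 0 & nonzerodivisor a)
  (nz2 : exists2 b, pi2 b = 0 & nonzerodivisor b).

Lemma mkc0 c : pi1 c = 0 -> pi1 c = pi2 0. Proof. by rewrite rmorph0. Qed.
Lemma mk0d d : pi2 d = 0 -> pi1 0 = pi2 d. Proof. by rewrite rmorph0. Qed.
Lemma p_c0 c : pi1 c = 0 -> p (mk c 0) = c. Proof. by move=> h; apply: mk_p; rewrite rmorph0 h. Qed.
Lemma q_c0 c : pi1 c = 0 -> q (mk c 0) = 0. Proof. by move=> h; apply: mk_q; rewrite rmorph0 h. Qed.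
Lemma p_0d d : pi2 d = 0 -> p (mk 0 d) = 0. Proof. by move=> h; apply: mk_p; rewrite rmorph0 h. Qed.
Lemma q_0d d : pi2 d = 0 -> q (mk 0 d) = d. Proof. by move=> h; apply: mk_q; rewrite rmorph0 h. Qed.
Lemma mk00 : mk 0 0 = 0.
Proof. by apply: pq_inj; rewrite ?p_c0 ?q_c0 ?rmorph0. Qed.

Lemma mk_add0 c c' : pi1 c = 0 -> pi1 c' = 0 -> mk (c + c') 0 = mk c 0 + mk c' 0.
Proof.
move=> h h'; have h'' : pi1 (c + c') = 0 by rewrite rmorphD h h' addr0.
by apply: pq_inj; rewrite !rmorphD ?p_c0 ?q_c0 // addr0.
Qed.

Lemma scal_mk r : exists t, pi1 r = pi2 t /\ forall c, pi1 c = 0 -> mk (r * c) 0 = mk r t * mk c 0.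
Proof.
have [t ht] := surj2 (pi1 r); exists t; split => // c hc.
have hrc : pi1 (r * c) = 0 by rewrite rmorphM hc mulr0.
by apply: pq_inj; rewrite !rmorphM ?p_c0 ?q_c0 ?mk_p ?mk_q // mulr0.
Qed.

Lemma ideal_sub_n1 (A : comNzRingType) (pi : {rmorphism A -> k})
  (un : forall x, pi x != 0 -> exists y, x * y = 1) (J : set A) :
  is_ideal J -> J <> setT -> forall c, J c -> pi c = 0.
Proof.
move=> HJ neq c Jc; apply/eqP; apply: contra_notT neq => /un [y cy].
apply: ideal1T => //; rewrite -cy mulrC; have [_ [_ JM]] := HJ; exact: JM.
Qed.

Definition E (I1 : set R1) : set R := [set z | I1 (p z) /\ pi2 (q z) = 0].

Lemma E_T (I1 : set R1) : calT R1 I1 -> I1 <> setT -> calT R (E I1).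
Proof.
move=> /calT_iff [HI PI [a Ia nza]] neq.
have sub := ideal_sub_n1 unit1 HI neq.
have [I0 [ID IM]] := HI.
have HE : is_ideal (E I1).
  split; first by rewrite /E /= !rmorph0.
  split.
    move=> x y [Ix qx] [Iy qy]; rewrite /E /= !rmorphD qx qy addr0; split => //.
    exact: ID.
  by move=> r x [Ix qx]; rewrite /E /= !rmorphM qx mulr0; split => //; apply: IM.
have [b b0 nzb] := nz2.
apply/calT_iff; split => //; last first.
  have ha : pi1 a = pi2 b by rewrite b0; exact: sub.
  exists (mk a b); first by rewrite /E /= mk_p // mk_q.
  move=> w hw; apply: pq_inj; rewrite rmorph0.
    by apply: nza; move: (congr1 p hw); rewrite rmorphM rmorph0 mk_p.
  by apply: nzb; move: (congr1 q hw); rewrite rmorphM rmorph0 mk_q.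
move=> phi Hphi z [Iz qz].
have [a' a0' nza'] := nz1.
have phi0 := lin_on0 (proj1 HE) Hphi.
have E1 c : I1 c -> E I1 (mk c 0).
  by move=> Ic; have h := sub _ Ic; split; rewrite ?(p_c0 h) ?(q_c0 h) ?rmorph0.
have E2 d : pi2 d = 0 -> E I1 (mk 0 d).
  by move=> hd; split; rewrite ?(p_0d hd) ?(q_0d hd).
have Q1 c : I1 c -> q (phi (mk c 0)) = 0.
  move=> Ic; apply: nzb.
  have := Hphi (mk 0 b) _ _ (E1 _ Ic) (E1 _ I0).
  have -> : mk 0 b * mk c 0 + mk 0 0 = 0.
    rewrite mk00 addr0; apply: pq_inj;
    by rewrite !rmorphM ?(p_0d b0) ?(q_c0 (sub _ Ic)) ?mul0r ?mulr0 rmorph0.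
  rewrite mk00 phi0 addr0 => /(congr1 q); rewrite rmorphM rmorph0 (q_0d b0).
  by move/esym.
have P2 d : pi2 d = 0 -> p (phi (mk 0 d)) = 0.
  move=> hd; apply: nza'.
  have := Hphi (mk a' 0) _ _ (E2 _ hd) (E2 _ (rmorph0 _)).
  have -> : mk a' 0 * mk 0 d + mk 0 0 = 0.
    rewrite mk00 addr0; apply: pq_inj;
    by rewrite !rmorphM ?(p_0d hd) ?(q_c0 a0') ?mul0r ?mulr0 rmorph0.
  rewrite mk00 phi0 addr0 => /(congr1 p); rewrite rmorphM rmorph0 (p_c0 a0').
  by move/esym.
have pz0 := sub _ Iz.
have zE : z = 1 * mk (p z) 0 + mk 0 (q z).
  apply: pq_inj; rewrite mul1r !rmorphD ?(p_c0 pz0) ?(q_c0 pz0) ?(p_0d qz) ?(q_0d qz).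
    by rewrite addr0. by rewrite add0r.
have e := Hphi 1 _ _ (E1 _ Iz) (E2 _ qz).
rewrite zE e mul1r; split; last first.
  by rewrite rmorphD (Q1 _ Iz) add0r -pq_fib (P2 _ qz) rmorph0.
rewrite rmorphD (P2 _ qz) addr0.
pose g c := p (phi (mk c 0)).
have Hg : lin_on I1 g.
  move=> r c c' Ic Ic'; rewrite /g.
  have [t [ht mkr]] := scal_mk r.
  have hrc : pi1 (r * c) = 0 by rewrite rmorphM (sub _ Ic) mulr0.
  rewrite mk_add0 ?(sub _ Ic') // mkr ?(sub _ Ic) //.
  by rewrite (Hphi _ _ _ (E1 _ Ic) (E1 _ Ic')) rmorphD rmorphM (mk_p ht).
exact: (PI g Hg).
Qed.

Lemma pE (I1 : set R1) : calT R1 I1 -> I1 <> setT -> p @` E I1 = I1.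
Proof.
move=> /calT_iff [HI _ _] neq; have sub := ideal_sub_n1 unit1 HI neq.
apply/seteqP; split; first by move=> _ [z [Iz _] <-].
move=> c Ic; exists (mk c 0); last exact: p_c0 (sub _ Ic).
by rewrite /E /= p_c0 ?q_c0 ?rmorph0 //; exact: sub.
Qed.

Lemma partI : finite_set (calT R) -> finite_set (calT R1).
Proof.
move=> fin; apply: (@sub_finite_set _ _ (((fun J : set R => p @` J) @` calT R) `|` [set setT])).
  move=> I1 TI; case: (pselect (I1 = setT)) => [->|neq]; first by right.
  by left; exists (E I1); [exact: E_T | exact: pE].
by rewrite finite_setU; split; [exact: finite_image | exact: finite_set1].
Qed.

Lemma unit_R z : pi1 (p z) != 0 -> exists w, z * w = 1.
Proof.
move=> hz; have [y1 h1] := unit1 hz.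
have hz2 : pi2 (q z) != 0 by rewrite -pq_fib.
have [y2 h2] := unit2 hz2.
have e : pi1 y1 = pi2 y2.
  apply: (mulfI hz); rewrite -rmorphM h1 rmorph1 pq_fib -rmorphM h2 rmorph1 //.
exists (mk y1 y2); apply: pq_inj; rewrite rmorphM rmorph1.
  by rewrite (mk_p e).
by rewrite (mk_q e).
Qed.

Lemma J_sub_m (J : set R) : calT R J -> J <> setT -> forall z, J z -> pi1 (p z) = 0.
Proof.
move=> /calT_iff [HJ _ _] neq z Jz; apply/eqP; apply: contra_notT neq => /unit_R [w zw].
apply: ideal1T => //; rewrite -zw mulrC; have [_ [_ JM]] := HJ; exact: JM.
Qed.

Definition liftf (h : R1 -> R1) (z : R) : R :=
  if pi1 (p z) == 0 then mk (h (p z)) 0 else 0.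

Lemma liftfE h z : pi1 (p z) = 0 -> liftf h z = mk (h (p z)) 0.
Proof. by move=> e; rewrite /liftf e eqxx. Qed.

Lemma liftL (J : set R) (h : R1 -> R1) : is_ideal J ->
  (forall z, J z -> pi1 (p z) = 0) -> (forall z, J z -> pi1 (h (p z)) = 0) ->
  (forall a x y, J x -> J y -> h (p a * p x + p y) = p a * h (p x) + h (p y)) ->
  lin_on J (liftf h).
Proof.
move=> [J0 [JD JM]] sub hsub hlin a x y Jx Jy.
have Jaxy : J (a * x + y) by apply: JD => //; apply: JM.
rewrite !liftfE ?sub //.
have e1 := hsub _ Jx; have e2 := hsub _ Jy; have e3 := hsub _ Jaxy.
apply: pq_inj.
  by rewrite (p_c0 e3) !rmorphD !rmorphM (p_c0 e1) (p_c0 e2) hlin.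
by rewrite (q_c0 e3) !rmorphD !rmorphM (q_c0 e1) (q_c0 e2) mulr0 addr0.
Qed.

Lemma memI1 (J : set R) : calT R J -> J <> setT -> forall z, J z -> J (mk (p z) 0).
Proof.
move=> TJ neq z Jz; have sub := J_sub_m TJ neq.
have /calT_iff [HJ PJ _] := TJ.
have L : lin_on J (liftf id) by apply: liftL.
by have := PJ _ L _ Jz; rewrite liftfE ?sub.
Qed.

Lemma J_of_parts (J : set R) : is_ideal J -> forall z, pi1 (p z) = 0 ->
  J (mk (p z) 0) -> J (mk 0 (q z)) -> J z.
Proof.
move=> [_ [JD _]] z pz J1 J2.
have qz : pi2 (q z) = 0 by rewrite -pq_fib.
have -> : z = mk (p z) 0 + mk 0 (q z).
  apply: pq_inj; rewrite !rmorphD ?(p_c0 pz) ?(q_c0 pz) ?(p_0d qz) ?(q_0d qz).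
    by rewrite addr0. by rewrite add0r.
exact: JD.
Qed.

Lemma I1_in_S1 (J : set R) : calT R J -> J <> setT ->
  (calT R1 `|` [set [set c | pi1 c = 0]]) [set c | J (mk c 0) /\ pi1 c = 0].
Proof.
move=> TJ neq; have sub := J_sub_m TJ neq; have mem := memI1 TJ neq.
have /calT_iff [HJ PJ [z Jz nzz]] := TJ.
have [J0 [JD JM]] := HJ.
set I1 := [set c | J (mk c 0) /\ pi1 c = 0].
case: (pselect (I1 = [set c | pi1 c = 0])) => [->|neq1]; first by right.
left; apply/calT_iff; split.
- split; first by rewrite /I1 /= mk00 rmorph0.
  split.
    move=> x y [Jx px] [Jy py]; split; last by rewrite rmorphD px py addr0.
    by rewrite mk_add0 //; apply: JD.
  move=> r x [Jx px]; have [t [ht mkr]] := scal_mk r.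
  by split; [rewrite mkr //; apply: JM | rewrite rmorphM px mulr0].
- case: (pselect (forall phi, lin_on I1 phi -> forall c, I1 c -> pi1 (phi c) = 0)) => H.
    move=> phi Hphi c [Jc pc].
    have L : lin_on J (liftf phi).
      apply: liftL => //.
        by move=> w Jw; apply: (H _ Hphi); split; [exact: mem | exact: sub].
      move=> a x y Jx Jy; apply: Hphi; split; try exact: mem; exact: sub.
    have := PJ _ L _ Jc; rewrite liftfE (p_c0 pc) // => J'.
    by split => //; apply: (H _ Hphi).
  exfalso; apply: H => phi Hphi c0 [Jc0 pc0]; apply: contrapT => nz.
  apply: neq1; apply/seteqP; split; first by move=> c [].
  move=> y py; split => //.
  have [v uv] := unit1 (introN eqP nz).
  have L : lin_on J (liftf (fun c => y * phi c)).
    apply: liftL => //.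
      by move=> w Jw; rewrite rmorphM /= py mul0r.
    move=> a x x' Jx Jx'; rewrite Hphi; first by rewrite mulrDr mulrCA.
      by split; [exact: mem | exact: sub].
    by split; [exact: mem | exact: sub].
  have := PJ _ L _ Jc0; rewrite liftfE (p_c0 pc0) // => J'.
  have [t [ht mkr]] := scal_mk v.
  have hyu : pi1 (y * phi c0) = 0 by rewrite rmorphM py mul0r.
  have -> : y = v * (y * phi c0) by rewrite mulrCA [v * _]mulrC uv mulr1.
  by rewrite mkr //; apply: JM.
- exists (p z); first by split; [exact: mem | exact: sub].
  move=> c ac; have [y py nzy] := nz1.
  have hcy : pi1 (c * y) = 0 by rewrite rmorphM py mulr0.
  have w0 : mk (c * y) 0 = 0.
    apply: nzz; apply: pq_inj; rewrite rmorphM rmorph0.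
      by rewrite (p_c0 hcy) mulrA ac mul0r.
    by rewrite (q_c0 hcy) mulr0.
  apply: nzy; rewrite mulrC; move: (congr1 p w0); by rewrite (p_c0 hcy) rmorph0.
Qed.
End FP.

Section FP2.
Variables (R R1 R2 : comNzRingType) (k : fieldType)
  (pi1 : {rmorphism R1 -> k}) (pi2 : {rmorphism R2 -> k})
  (p : {rmorphism R -> R1}) (q : {rmorphism R -> R2}) (mk : R1 -> R2 -> R).
Hypotheses (pq_inj : forall z z', p z = p z' -> q z = q z' -> z = z')
  (pq_fib : forall z, pi1 (p z) = pi2 (q z))
  (mk_p : forall c d, pi1 c = pi2 d -> p (mk c d) = c)
  (mk_q : forall c d, pi1 c = pi2 d -> q (mk c d) = d)
  (surj1 : forall c : k, exists s : R1, pi1 s = c)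
  (surj2 : forall c : k, exists t : R2, pi2 t = c)
  (unit1 : forall x, pi1 x != 0 -> exists y, x * y = 1)
  (unit2 : forall x, pi2 x != 0 -> exists y, x * y = 1)
  (nz1 : exists2 a, pi1 a = 0 & nonzerodivisor a)
  (nz2 : exists2 b, pi2 b = 0 & nonzerodivisor b).

Let mk' := fun d c => mk c d.
Let pq_inj' : forall z z', q z = q z' -> p z = p z' -> z = z'.
Proof. by move=> z z' e1 e2; apply: pq_inj. Qed.
Let pq_fib' : forall z, pi2 (q z) = pi1 (p z). Proof. by move=> z; rewrite pq_fib. Qed.
Let mk_p' : forall d c, pi2 d = pi1 c -> q (mk' d c) = d.
Proof. by move=> d c e; apply: mk_q. Qed.
Let mk_q' : forall d c, pi2 d = pi1 c -> p (mk' d c) = c.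
Proof. by move=> d c e; apply: mk_p. Qed.

Lemma main_fp : finite_set (calT R) <-> finite_set (calT R1) /\ finite_set (calT R2).
Proof.
split.
  move=> fin; split.
    exact: (partI pq_inj pq_fib mk_p mk_q surj2 unit1 nz1 nz2 fin).
  exact: (partI pq_inj' pq_fib' mk_p' mk_q' surj1 unit2 nz2 nz1 fin).
move=> [f1 f2].
pose S1 := calT R1 `|` [set [set c | pi1 c = 0]].
pose S2 := calT R2 `|` [set [set d | pi2 d = 0]].
pose G := fun P : set R1 * set R2 => [set z | P.1 (p z) /\ P.2 (q z)].
apply: (@sub_finite_set _ _ ((G @` (S1 `*` S2)) `|` [set setT])); last first.
  rewrite finite_setU; split; last exact: finite_set1.
  apply: finite_image; apply: finite_setX; rewrite finite_setU; split => //;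
    exact: finite_set1.
move=> J TJ; case: (pselect (J = setT)) => [->|neq]; first by right.
left; exists ([set c | J (mk c 0) /\ pi1 c = 0], [set d | J (mk 0 d) /\ pi2 d = 0]).
  split.
    exact: (I1_in_S1 pq_inj pq_fib mk_p mk_q surj2 unit1 unit2 nz1 TJ neq).
  exact: (I1_in_S1 pq_inj' pq_fib' mk_p' mk_q' surj1 unit2 unit1 nz2 TJ neq).
have /calT_iff [HJ _ _] := TJ.
apply/seteqP; split.
  move=> z [[J1 p1] [J2 _]]; exact: (J_of_parts pq_inj pq_fib mk_p mk_q HJ p1 J1 J2).
move=> z Jz; split; split.
- exact: (memI1 pq_inj pq_fib mk_p mk_q unit1 unit2 TJ neq Jz).
- exact: (J_sub_m pq_inj pq_fib mk_p mk_q unit1 unit2 TJ neq Jz).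
- exact: (memI1 pq_inj' pq_fib' mk_p' mk_q' unit2 unit1 TJ neq Jz).
- exact: (J_sub_m pq_inj' pq_fib' mk_p' mk_q' unit2 unit1 TJ neq Jz).
Qed.
End FP2.

Unset Implicit Arguments.
Theorem corollary5p2 (R1 R2 : comNzRingType) (k : fieldType)
    (pi1 : {rmorphism R1 -> k}) (pi2 : {rmorphism R2 -> k})
    (pi1_surj : forall c : k, exists s : R1, pi1 s = c)
    (pi2_surj : forall c : k, exists t : R2, pi2 t = c)
    (noeth1 : noetherian R1) (noeth2 : noetherian R2)
    (loc1 : is_local R1) (loc2 : is_local R2)
    (depth1 : positive_depth R1) (depth2 : positive_depth R2) :
  finite_set (calT (fiber_product pi1 pi2)) <->
  finite_set (calT R1) /\ finite_set (calT R2).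
Proof.
pose R := fiber_product pi1 pi2.
pose p : {rmorphism R -> R1} := GRing.RMorphism.clone _ _ (fst \o (val : R -> (R1 * R2)%type)) _.
pose q : {rmorphism R -> R2} := GRing.RMorphism.clone _ _ (snd \o (val : R -> (R1 * R2)%type)) _.
pose mk (c : R1) (d : R2) : R := insubd (0 : R) (c, d).
have pq_fib : forall z, pi1 (p z) = pi2 (q z).
  by move=> z; apply/eqP; have := valP z; rewrite unfold_in.
have mkv c d : pi1 c = pi2 d -> val (mk c d) = (c, d).
  by move=> e; rewrite /mk insubdK // inE /= e.
apply: (@main_fp R R1 R2 k pi1 pi2 p q mk).
- move=> z z' e1 e2; apply: val_inj.
  rewrite [val z]surjective_pairing [val z']surjective_pairing.
  by congr pair.
- exact: pq_fib.
- by move=> c d e; rewrite /= mkv.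
- by move=> c d e; rewrite /= mkv.
- exact: pi1_surj.
- exact: pi2_surj.
- exact: local_unit loc1.
- exact: local_unit loc2.
- exact: depth1 _ (ker_max pi1_surj).
- exact: depth2 _ (ker_max pi2_surj).
Qed.
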